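(* For the branching-within-branching process described in the context and its associated branching process in random environment $(Z_n')_{n\ge0}$, for all $n,k,z\in\mathbb{N}_0$, $$\mathbb{P}_z(Z_n'=k)=\nu^{-n}\,\mathbb{E}_z\mathcal{T}_{n,k}\quad\text{and}\quad \mathbb{P}_z(Z_n'>0)=\nu^{-n}\,\mathbb{E}_z\mathcal{T}_n^*.$$
   Context: Branching-within-branching process (BwBP): Let $\mathbb{V}$ be the Ulam-Harris tree with root $\varnothing$. Let $(N_\mathsf{v})_{\mathsf{v}\in\mathbb{V}}$ be i.i.d. copies of an $\mathbb{N}_0$-valued random variable $N$ with law $(p_k)_{k\ge0}$ and finite mean $\nu=\mathbb{E}N$. The cell tree is the Galton-Watson tree $\mathbb{T}=\bigcup_n\mathbb{T}_n$, $\mathbb{T}_0=\{\varnothing\}$, $\mathbb{T}_n=\{\mathsf{v}_1\dots\mathsf{v}_n:\mathsf{v}_1\dots\mathsf{v}_{n-1}\in\mathbb{T}_{n-1},\ 1\le \mathsf{v}_n\le N_{\mathsf{v}_1\dots\mathsf{v}_{n-1}}\}$. For each $k\in\mathbb{N}$ let $X^{(\bullet,k)}=(X^{(1,k)},\dots,X^{(k,k)})$ be an $\mathbb{N}_0^k$-valued random vector and $X^{(\bullet,k)}_{i,\mathsf{v}}$, $i\in\mathbb{N},\mathsf{v}\in\mathbb{V}$, i.i.d. copies; these families for different $k$ are mutually independent and independent of $(N_\mathsf{v})$; $X^{(j,k)}_{i,\mathsf{v}}:=0$ for $j>k$. Parasite numbers: $Z_\varnothing$ given and $Z_{\mathsf{v}j}=\sum_{i=1}^{Z_\mathsf{v}}X^{(j,N_\mathsf{v})}_{i,\mathsf{v}}$.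 $\mathbb{P}_z$, $\mathbb{E}_z$ denote probability and expectation when the process starts with one cell containing $Z_\varnothing=z$ parasites. $\mathcal{T}_{n,k}$ is the number of cells $\mathsf{v}\in\mathbb{T}_n$ with $Z_\mathsf{v}=k$, and $\mathcal{T}_n^*=\#\{\mathsf{v}\in\mathbb{T}_n:Z_\mathsf{v}>0\}$ is the number of contaminated cells in generation $n$. Put $\mu_{j,k}=\mathbb{E}X^{(j,k)}$, $\gamma=\sum_{k\ge1}p_k\sum_{j=1}^k\mu_{j,k}$. Standing assumptions: $0<\gamma<\infty$; $p_1<1$ and the total number of parasites in generation 1 (starting from one cell with one parasite) is not a.s. equal to $1$; $p_k\,\mathbb{P}(X^{(j,k)}\ge2)>0$ for at least one pair $1\le j\le k$. Associated branching process in random environment (ABPRE): $(Z_n')_{n\ge0}$ is a Galton-Watson process in i.i.d. random environment $\Lambda=(\Lambda_n)_{n\ge0}$ with values in $\{\mathcal{L}(X^{(j,k)}):1\le j\le k<\infty\}$, $\mathbb{P}(\Lambda_0=\mathcal{L}(X^{(j,k)}))=p_k/\nu$, i.e. given $\Lambda$ all individuals of generation $n$ reproduce independently with law $\Lambda_n$; under $\mathbb{P}_z$ it starts with $Z_0'=z$. *)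

(* Defs.v *)
From HB Require Import structures.
From mathcomp Require Import all_boot all_order all_algebra.
From mathcomp Require Import all_classical all_reals all_analysis.
Set Implicit Arguments. Unset Strict Implicit. Unset Printing Implicit Defensive.
Import Order.TTheory GRing.Theory Num.Theory.
Local Open Scope classical_set_scope.
Local Open Scope ring_scope.

(* Cells are Ulam-Harris words: sequences of positive integers, [::] = root,
   child j of v is rcons v j. *)
Definition isUH (v : seq nat) : bool := all (fun x => 0 < x)%N v.

Section BwBP.
Context {d : measure_display} {Omega : measurableType d} {R : realType}.
(* N v = number of daughter cells of cell v;
   X k i v = the vector X^{(.,k)}_{i,v}, as a sequence of length k:
   X^{(j,k)}_{i,v} = nth 0 (X k i v) j.-1  (which is 0 for j > k). *)
Variables (N : seq nat -> Omega -> nat) (X : nat -> nat -> seq nat -> Omega -> seq nat).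

Definition Xjk (j k i : nat) (v : seq nat) (w : Omega) : nat := nth 0%N (X k i v w) j.-1.

Fixpoint gen (n : nat) (w : Omega) : seq (seq nat) :=
  match n with
  | 0 => [:: [::]]
  | n'.+1 => flatten [seq [seq rcons v j | j <- iota 1 (N v w)] | v <- gen n' w]
  end.

(* parasite numbers along a word, Z_{vj} = sum_{i=1}^{Z_v} X^{(j,N_v)}_{i,v} *)
Fixpoint Zaux (pre : seq nat) (cnt : nat) (word : seq nat) (w : Omega) : nat :=
  match word with
  | [::] => cnt
  | j :: word' =>
      Zaux (rcons pre j) (\sum_(1 <= i < cnt.+1) Xjk j (N pre w) i pre w)%N word' w
  end.

Definition Zpar (z : nat) (v : seq nat) (w : Omega) : nat := Zaux [::] z v w.

Definition Tnk (z n k : nat) (w : Omega) : nat :=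
  count (fun v => Zpar z v w == k) (gen n w).
Definition Tstar (z n : nat) (w : Omega) : nat :=
  count (fun v => 0 < Zpar z v w)%N (gen n w).
End BwBP.

Fixpoint Zprime {T : Type} (Y : nat -> nat -> T -> nat) (z n : nat) (w : T) : nat :=
  match n with
  | 0 => z
  | n'.+1 => (\sum_(1 <= i < (Zprime Y z n' w).+1) Y n' i w)%N
  end.

Local Open Scope ereal_scope.

Section Model.
Context {d : measure_display} {Omega : measurableType d} {R : realType}.
Variable P : probability Omega R.
Variables (N : seq nat -> Omega -> nat) (X : nat -> nat -> seq nat -> Omega -> seq nat).

(* p_k = P(N = k), with N_root the reference copy of N *)
Definition pk (k : nat) : R := fine (P [set w | N [::] w = k]).

(* law of X^{(j,k)}: P(X^{(j,k)} = y), with X_{1,root} the reference copy *)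
Definition muLaw (j k y : nat) : R := fine (P [set w | Xjk X j k 1 [::] w = y]).

(* The BwBP hypotheses: (N_v)_{v in V} i.i.d.; for each k, X^{(.,k)}_{i,v}
   (i >= 1, v in V) i.i.d. N_0^k-valued vectors; all these families mutually
   independent (for discrete variables: product rule on every finite
   subfamily of point events). *)
Definition bwbp_model : Prop :=
  [/\ (forall v m, isUH v -> measurable [set w | N v w = m]) /\
      (forall k i v s, (0 < i)%N -> isUH v -> measurable [set w | X k i v w = s]),
      (forall k i v w, (0 < i)%N -> isUH v -> size (X k i v w) = k),
      (forall v m, isUH v -> P [set w | N v w = m] = P [set w | N [::] w = m]),
      (forall k i v s, (0 < i)%N -> isUH v ->
          P [set w | X k i v w = s] = P [set w | X k 1 [::] w = s]) &
      (forall (A : seq (seq nat * nat)) (B : seq ((nat * nat * seq nat) * seq nat)),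
          uniq (map fst A) -> uniq (map fst B) ->
          all (fun a => isUH a.1) A ->
          all (fun b => (0 < b.1.1.2)%N && isUH b.1.2) B ->
          P [set w | (all (fun a => N a.1 w == a.2) A &&
                     all (fun b => X b.1.1.1 b.1.1.2 b.1.2 w == b.2) B)]
          = ((\prod_(a <- A) fine (P [set w | N a.1 w = a.2])) *
             (\prod_(b <- B) fine (P [set w | X b.1.1.1 b.1.1.2 b.1.2 w = b.2])))%R%:E)].

Definition has_mean (nu : R) : Prop :=
  \int[P]_w ((N [::] w)%:R)%:E = nu%:E.

Definition gammaE : \bar R :=
  \sum_(1 <= k <oo) ((pk k)%:E *
     \sum_(1 <= j < k.+1) \int[P]_w ((Xjk X j k 1 [::] w)%:R)%:E).

Definition standing_assumptions : Prop :=
  [/\ 0 < gammaE < +oo,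
      (pk 1 < 1)%R,
      P [set w | (\sum_(v <- gen N 1 w) Zpar N X 1 v w)%N = 1%N] < 1 &
      exists j k, [/\ (1 <= j <= k)%N & (0 < pk k * fine (P [set w | (2 <= Xjk X j k 1 [::] w)%N]))%R]].

(* environment Lambda_n encoded as the index pair (j,k) of the law
   L(X^{(j,k)}); P(Lambda_0 = (j,k)) = p_k / nu for 1 <= j <= k *)
Definition envProb (nu : R) (e : nat * nat) : R :=
  if (0 < e.1 <= e.2)%N then (pk e.2 / nu)%R else 0%R.

(* The ABPRE on a probability space P': E n = Lambda_n, Y n i = offspring of
   individual i (i >= 1) of generation n.  (Lambda_n) i.i.d. with law envProb,
   and given Lambda all individuals reproduce independently, individuals of
   generation n with law L(X^{(Lambda_n)}): stated as the joint law of every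
   finite family (Lambda_0..Lambda_{m-1}, Y_{n,i} with n < m). *)
Definition abpre_model (nu : R) {d' : measure_display} {Omega' : measurableType d'}
  (P' : probability Omega' R) (E : nat -> Omega' -> nat * nat)
  (Y : nat -> nat -> Omega' -> nat) : Prop :=
  [/\ (forall n e, measurable [set w | E n w = e]),
      (forall n i y, (0 < i)%N -> measurable [set w | Y n i w = y]) &
      (forall (e : seq (nat * nat)) (S : seq ((nat * nat) * nat)),
          uniq (map fst S) ->
          all (fun s => (s.1.1 < size e)%N && (0 < s.1.2)%N) S ->
          P' [set w | (all (fun n => E n w == nth (0, 0)%N e n) (iota 0 (size e)) &&
                      all (fun s => Y s.1.1 s.1.2 w == s.2) S)]
          = ((\prod_(x <- e) envProb nu x) *
             (\prod_(s <- S) muLaw (nth (0, 0)%N e s.1.1).1 (nth (0, 0)%N e s.1.1).2 s.2))%R%:E)].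
End Model.

(* Main.v *)
Require Import Defs.
From HB Require Import structures.
From mathcomp Require Import all_boot all_order all_algebra.
From mathcomp Require Import all_classical all_reals all_analysis.
From mathcomp Require Import lebesgue_measure measurable_realfun.
From mathcomp Require Import ring.
Import Order.TTheory GRing.Theory Num.Theory.

Module GM.
Local Open Scope classical_set_scope.
Local Open Scope ring_scope.
Local Open Scope ereal_scope.

Section Gen.
Context {R : realType}.

Lemma my_esum_pickle (U : countType) (S : set U) (f : U -> \bar R) :
  (forall t, S t -> 0 <= f t) ->
  \esum_(t in S) f t =
  \sum_(n <oo | n \in pickle @` S) oapp f 0 (unpickle n).
Proof.
move=> f0; rewrite nneseries_esum; last first.
  by move=> n; rewrite inE => -[t St <-]; rewrite pickleK /=; exact: f0.
rewrite set_mem_set esum_image; last by move=> x y _ _; exact: (pcan_inj (@pickleK U)).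
by apply: eq_esum => t _; rewrite pickleK.
Qed.

Lemma my_esumZl (U : countType) (S : set U) (f : U -> \bar R) (k : R) :
  (0 <= k)%R -> (forall t, S t -> 0 <= f t) ->
  \esum_(t in S) (k%:E * f t) = k%:E * \esum_(t in S) f t.
Proof.
move=> k0 f0.
rewrite !my_esum_pickle//; last by move=> t St; rewrite mule_ge0// f0.
rewrite -nneseriesZl; last by move=> n; rewrite inE => -[t St <-]; rewrite pickleK /=; exact: f0.
apply: eq_eseriesr => n; rewrite inE => -[t St <-]; by rewrite pickleK.
Qed.

Section Meas.
Context {d} {T : measurableType d} (mu : {measure set T -> \bar R}).

Lemma bigcup_pickle (U : countType) (S : set U) (F : U -> set T) :
  \bigcup_(t in S) F t = \bigcup_(n in pickle @` S) oapp F set0 (unpickle n).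
Proof.
apply/seteqP; split => w.
  by move=> [t St Ft]; exists (pickle t); [exists t|rewrite pickleK].
by move=> [n [t St <-]]; rewrite pickleK /= => Ft; exists t.
Qed.

Lemma my_cmeas (U : countType) (S : set U) (F : U -> set T) :
  (forall t, S t -> measurable (F t)) -> measurable (\bigcup_(t in S) F t).
Proof.
move=> mF; rewrite bigcup_pickle; apply: bigcup_measurable => n [t St <-].
by rewrite pickleK /=; exact: mF.
Qed.

Lemma my_cadd (U : countType) (S : set U) (F : U -> set T) :
  (forall t, S t -> measurable (F t)) ->
  (forall t t' w, S t -> S t' -> F t w -> F t' w -> t = t') ->
  mu (\bigcup_(t in S) F t) = \esum_(t in S) mu (F t).
Proof.
move=> mF dF; rewrite bigcup_pickle measure_bigcup.
- rewrite my_esum_pickle//; apply: eq_eseriesr => n; rewrite inE => -[t St <-].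
  by rewrite pickleK.
- by move=> n [t St <-]; rewrite pickleK /=; exact: mF.
move=> n m [t St <-] [t' St' <-]; rewrite !pickleK /= => -[w [Fw Fw']].
by rewrite (dF _ _ _ St St' Fw Fw').
Qed.

Lemma my_int_esum (U : countType) (S : set U) (f : U -> T -> \bar R) :
  (forall t, S t -> measurable_fun setT (f t)) -> (forall t x, 0 <= f t x) ->
  \int[mu]_x (\esum_(t in S) f t x) = \esum_(t in S) \int[mu]_x f t x.
Proof.
move=> mf f0.
under eq_integral do rewrite my_esum_pickle// eseries_mkcond.
rewrite integral_nneseries//.
- rewrite my_esum_pickle; last by move=> t _; exact: integral_ge0.
  rewrite [RHS]eseries_mkcond; apply: eq_eseriesr => n _.
  case: ifPn => _; last by rewrite integral0.
  by case: (unpickle n) => //= ; rewrite integral0.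
- move=> n; have [/set_mem [t St <-]|_] := boolP (n \in pickle @` S); last exact: measurable_cst.
  by rewrite pickleK /=; exact: mf.
- move=> n x _; case: (n \in pickle @` S) => //; case: (unpickle n) => [t|] //=.
Qed.

End Meas.
End Gen.

End GM.
Import GM.

Module BM.
Local Open Scope classical_set_scope.
Local Open Scope ring_scope.

Definition TT := seq ((nat * nat) * seq nat).

Fixpoint validT (c : nat) (t : TT) : bool :=
  if t is x :: t' then (size x.2 == c) && validT (sumn x.2) t' else true.
Fixpoint endc (c : nat) (t : TT) : nat :=
  if t is x :: t' then endc (sumn x.2) t' else c.
Definition wordT (t : TT) : seq nat := map (fun x => x.1.1) t.
Definition okT (t : TT) : bool := all (fun x => (0 < x.1.1 <= x.1.2)%N) t.

Lemma sum_iota (F : nat -> nat) c :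
  (\sum_(1 <= i < c.+1) F i)%N = sumn [seq F i | i <- iota 1 c].
Proof. by rewrite sumnE big_map /index_iota subn1. Qed.

Fixpoint Alist (pre : seq nat) (t : TT) : seq (seq nat * nat) :=
  if t is x :: t' then (pre, x.1.2) :: Alist (rcons pre x.1.1) t' else [::].
Fixpoint Clist (pre : seq nat) (t : TT) : seq ((nat * nat * seq nat) * pred (seq nat)) :=
  if t is x :: t' then
    [seq ((x.1.2, i, pre), (fun s : seq nat => nth 0%N s x.1.1.-1 == nth 0%N x.2 i.-1))
    | i <- iota 1 (size x.2)] ++ Clist (rcons pre x.1.1) t'
  else [::].

Lemma map_iota_eq (F : nat -> nat) (ys : seq nat) m :
  ([seq F i | i <- iota m (size ys)] == ys) =
  all (fun i => F i == nth 0%N ys (i - m)) (iota m (size ys)).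
Proof.
elim: ys m => [|y ys IH] m //=.
rewrite eqseq_cons subnn /= IH; congr (_ && _).
apply: eq_in_all => i; rewrite mem_iota => /andP[mi _].
by rewrite -(subnSK mi).
Qed.

Lemma map_nth_iota1 (ys : seq nat) :
  [seq nth 0%N ys i.-1 | i <- iota 1 (size ys)] = ys.
Proof.
rewrite -[1%N]/(1 + 0)%N iotaDl -map_comp.
rewrite (eq_map (g := nth 0%N ys)); first exact: mkseq_nth.
by [].
Qed.

Lemma sizeA pre t : all (fun a => size pre <= size a.1)%N (Alist pre t).
Proof.
elim: t pre => [|x t IH] pre //=; rewrite leqnn /=.
apply: sub_all (IH (rcons pre x.1.1)) => a /=; rewrite size_rcons; exact: ltnW.
Qed.

Lemma uniqA pre t : uniq (map fst (Alist pre t)).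
Proof.
elim: t pre => [|x t IH] pre //=; rewrite IH andbT.
apply/mapP => -[a aA epa].
have := allP (sizeA (rcons pre x.1.1) t) a aA; rewrite -epa size_rcons ltnn.
by [].
Qed.

Lemma sizeC pre t : all (fun c => size pre <= size c.1.2)%N (Clist pre t).
Proof.
elim: t pre => [|x t IH] pre //=; rewrite all_cat all_map.
apply/andP; split; first by apply/allP => i _ /=.
apply: sub_all (IH (rcons pre x.1.1)) => a /=; rewrite size_rcons; exact: ltnW.
Qed.

Lemma uniqC pre t : uniq (map fst (Clist pre t)).
Proof.
elim: t pre => [|x t IH] pre //=; rewrite map_cat cat_uniq IH andbT.
rewrite -map_comp map_inj_uniq ?iota_uniq; last by move=> i1 i2 [].
apply/hasPn => kk /mapP[c cC ->]; apply/mapP => -[i _ /= ec].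
have := allP (sizeC (rcons pre x.1.1) t) c cC; rewrite ec size_rcons ltnn.
by [].
Qed.

Lemma UH_A pre t : isUH pre -> okT t -> all (fun a => isUH a.1) (Alist pre t).
Proof.
elim: t pre => [|x t IH] pre //= Hp /andP[/andP[j0 _] ot]; rewrite Hp /=.
by apply: IH => //; rewrite /isUH all_rcons j0.
Qed.

Definition condK (b : nat * nat * seq nat) := (0 < b.1.2)%N && isUH b.2.

Lemma UH_C pre t : isUH pre -> okT t -> all (fun c => condK c.1) (Clist pre t).
Proof.
elim: t pre => [|x t IH] pre //= Hp /andP[/andP[j0 _] ot]; rewrite all_cat all_map.
apply/andP; split.
  by apply/allP => i; rewrite mem_iota /condK /= Hp andbT => /andP[].
by apply: IH => //; rewrite /isUH all_rcons j0.
Qed.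

Section Comb.
Context {d : measure_display} {T : measurableType d} (N : seq nat -> T -> nat) (X : nat -> nat -> seq nat -> T -> seq nat).

Fixpoint trajB (pre : seq nat) (c : nat) (v : seq nat) (w : T) : TT :=
  if v is j :: v' then
    let ys := [seq Xjk X j (N pre w) i pre w | i <- iota 1 c] in
    ((j, N pre w), ys) :: trajB (rcons pre j) (sumn ys) v' w
  else [::].

Fixpoint genok (pre : seq nat) (v : seq nat) (w : T) : bool :=
  if v is j :: v' then (0 < j <= N pre w)%N && genok (rcons pre j) v' w else true.

Lemma Zaux_traj pre c v w : Zaux N X pre c v w = endc c (trajB pre c v w).
Proof. by elim: v pre c => //= j v IH pre c; rewrite IH sum_iota. Qed.

Lemma word_traj pre c v w : wordT (trajB pre c v w) = v.
Proof. by elim: v pre c => //= j v IH pre c; rewrite IH. Qed.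

Lemma size_traj pre c v w : size (trajB pre c v w) = size v.
Proof. by elim: v pre c => //= j v IH pre c; rewrite IH. Qed.

Lemma valid_traj pre c v w : validT c (trajB pre c v w).
Proof. by elim: v pre c => //= j v IH pre c; rewrite size_map size_iota eqxx IH. Qed.

Lemma ok_traj pre c v w : okT (trajB pre c v w) = genok pre v w.
Proof. by elim: v pre c => //= j v IH pre c; rewrite -(IH _ (sumn [seq Xjk X j (N pre w) i pre w | i <- iota 1 c])). Qed.

Lemma genok_rcons pre u j w :
  genok pre (rcons u j) w = genok pre u w && (0 < j <= N (pre ++ u) w)%N.
Proof.
elim: u pre => [|a u IH] pre /=; first by rewrite cats0 andbT.
by rewrite IH cat_rcons andbA.
Qed.

Lemma mem_gen n v w : (v \in gen N n w) = (size v == n) && genok [::] v w.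
Proof.
elim: n v => [|n IH] v /=.
  by case: v.
case/lastP: v => [|u j].
  apply/negbTE/negP => /flatten_mapP[v' _] /mapP[j' _] /eqP.
  by rewrite eq_sym -size_eq0 size_rcons.
rewrite size_rcons eqSS genok_rcons /= andbA -IH.
apply/flatten_mapP/andP.
  move=> [v' v'g] /mapP[j' j'i] /rcons_inj[-> ->]; split => //.
  by move: j'i; rewrite mem_iota add1n ltnS.
move=> [ug jN]; exists u => //; apply/mapP; exists j => //.
by rewrite mem_iota add1n ltnS.
Qed.

Lemma uniq_gen n w : uniq (gen N n w).
Proof.
elim: n => [|n IH] //=.
elim: (gen N n w) IH => [|v s IHs] //= /andP[vs us].
rewrite cat_uniq IHs // andbT map_inj_uniq ?iota_uniq //; last exact: rcons_injr.
apply/hasPn => x /flatten_mapP[v' v's] /mapP[j' _ ->].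
apply/mapP => -[j _] /rcons_inj[ev _]; by move: vs; rewrite -ev v's.
Qed.

Definition allA (A : seq (seq nat * nat)) w := all (fun a => N a.1 w == a.2) A.
Definition allB (B : seq ((nat * nat * seq nat) * seq nat)) w :=
  all (fun b => X b.1.1.1 b.1.1.2 b.1.2 w == b.2) B.
Definition allC (C : seq ((nat * nat * seq nat) * pred (seq nat))) w :=
  all (fun c => c.2 (X c.1.1.1 c.1.1.2 c.1.2 w)) C.

Lemma trajB_eq pre c t w : validT c t ->
  (trajB pre c (wordT t) w == t) = allA (Alist pre t) w && allC (Clist pre t) w.
Proof.
elim: t pre c => [|[[j k] ys] t IH] pre c //= /andP[/eqP <- vt].
rewrite /allA /allC /= all_cat all_map eqseq_cons !xpair_eqE eqxx /=.
case: (N pre w =P k) => [->|_] //=.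
have -> : all (fun i => nth 0%N (X k i pre w) j.-1 == nth 0%N ys i.-1) (iota 1 (size ys))
   = ([seq Xjk X j k i pre w | i <- iota 1 (size ys)] == ys).
  by rewrite map_iota_eq; apply: eq_all => i; rewrite subn1.
case: eqP => [->|_] /=; last by rewrite andbF.
by rewrite IH.
Qed.

End Comb.

Section Prob.
Context {R : realType} {d : measure_display} {Omega : measurableType d}
  (P : probability Omega R)
  (N : seq nat -> Omega -> nat) (X : nat -> nat -> seq nat -> Omega -> seq nat).
Hypothesis HM : bwbp_model P N X.
Local Open Scope ereal_scope.

Lemma measI2 (p q : Omega -> bool) : measurable [set w | p w] -> measurable [set w | q w] ->
  measurable [set w | p w && q w].
Proof.
move=> mp mq; have -> : [set w | p w && q w] = [set w | p w] `&` [set w | q w].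
  by apply/seteqP; split => w /= ; [move/andP|move=> [-> ->]].
exact: measurableI.
Qed.

Lemma meas_all (U : Type) (Q : pred U) (s : seq U) (f : U -> Omega -> bool) :
  (forall u, Q u -> measurable [set w | f u w]) -> all Q s ->
  measurable [set w | all (fun u => f u w) s].
Proof.
move=> H; elim: s => [|u s IH] /=.
  by rewrite (_ : [set w | true] = setT) //; apply/seteqP; split.
by move=> /andP[Qu Qs]; apply: measI2; [exact: H|exact: IH].
Qed.

Lemma predX_bigcup k i v (p : pred (seq nat)) :
  [set w | p (X k i v w)] = \bigcup_(s in [set s | p s]) [set w | X k i v w = s].
Proof.
by apply/seteqP; split => w /=; [move=> pw; exists (X k i v w)|move=> [s ps ->]].
Qed.

Lemma meas_N v m : isUH v -> measurable [set w | N v w == m].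
Proof.
case: HM => [[mN _] _ _ _ _] Hv.
rewrite (_ : [set w | N v w == m] = [set w | N v w = m]); first exact: mN.
by apply/seteqP; split => w /= /eqP.
Qed.

Lemma meas_X k i v s : (0 < i)%N -> isUH v -> measurable [set w | X k i v w = s].
Proof. by case: HM => [[_ mX] _ _ _ _]; exact: mX. Qed.

Lemma meas_Xb k i v s : (0 < i)%N -> isUH v -> measurable [set w | X k i v w == s].
Proof.
move=> i0 Hv; rewrite (_ : [set w | X k i v w == s] = [set w | X k i v w = s]).
  exact: meas_X.
by apply/seteqP; split => w /= /eqP.
Qed.

Lemma meas_Xp k i v (p : pred (seq nat)) : (0 < i)%N -> isUH v ->
  measurable [set w | p (X k i v w)].
Proof. by move=> i0 Hv; rewrite predX_bigcup; apply: my_cmeas => s _; exact: meas_X. Qed.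


Lemma fineP_ge0 (A : set Omega) : (0 <= fine (P A))%R.
Proof. by apply: fine_ge0; exact: measure_ge0. Qed.

Lemma prodC (A : seq (seq nat * nat)) (C : seq ((nat * nat * seq nat) * pred (seq nat))) :
  forall B : seq ((nat * nat * seq nat) * seq nat),
  uniq (map fst A) -> uniq (map fst B ++ map fst C) -> all (fun a => isUH a.1) A ->
  all (fun b => condK b.1) B -> all (fun c => condK c.1) C ->
  P [set w | allA N A w && (allB X B w && allC X C w)] =
  ((\prod_(a <- A) fine (P [set w | N a.1 w = a.2])) *
   (\prod_(b <- B) fine (P [set w | X b.1.1.1 b.1.1.2 b.1.2 w = b.2])) *
   (\prod_(c <- C) fine (P [set w | c.2 (X c.1.1.1 c.1.1.2 c.1.2 w)])))%:E.
Proof.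
have HI := HM; case: HI => _ _ _ _ Hind.
elim: C => [|c C IH] B uA uBC HA HB HC.
  rewrite big_nil mulr1; rewrite cats0 in uBC.
  rewrite -(Hind A B) //; congr (P _); apply/seteqP; split => w /=.
    by rewrite /allC /= andbT.
  by rewrite /allC /= andbT.
move: HC => /= /andP[Hc HC].
have E : [set w | allA N A w && (allB X B w && allC X (c :: C) w)] =
  \bigcup_(s in [set s | c.2 s])
     [set w | allA N A w && (allB X (rcons B (c.1, s)) w && allC X C w)].
  apply/seteqP; split => w /=.
    rewrite /allC /= => /and3P[HAw HBw /andP[Hcw HCw]].
    exists (X c.1.1.1 c.1.1.2 c.1.2 w) => //.
    rewrite /= HAw; move: HBw; rewrite /allB all_rcons /= eqxx => -> /=; exact: HCw.
  move=> [s cs] /=; rewrite /allB all_rcons /= => /and3P[HAw /andP[/eqP Xs HBw] HCw].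
  by rewrite HAw HBw /allC /= Xs cs.
have uBC' s : uniq (map fst (rcons B (c.1, s)) ++ map fst C).
  by rewrite map_rcons cat_rcons.
have HB' s : all (fun b => condK b.1) (rcons B (c.1, s)) by rewrite all_rcons Hc HB.
rewrite E (my_cadd P); first last.
- move=> s s' w _ _ /= /and3P[_ + _] /and3P[_ + _].
  by rewrite /allB !all_rcons /= => /andP[/eqP <- _] /andP[/eqP <- _].
- move=> s _; apply: measI2.
    by apply: (@meas_all _ (fun a => isUH a.1)) => // a; exact: meas_N.
  apply: measI2.
    apply: (@meas_all _ (fun b => condK b.1)) => // b /andP[b0 bU]; exact: meas_Xb.
  apply: (@meas_all _ (fun b => condK b.1)) => // b /andP[b0 bU]; exact: meas_Xp.
set pA := (\prod_(a <- A) _)%R; set pB := (\prod_(b <- B) _)%R.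
pose pC := (\prod_(c <- C) fine (P [set w | c.2 (X c.1.1.1 c.1.1.2 c.1.2 w)]))%R.
have Hc0 := Hc; move/andP: Hc0 => [c0 cU].
transitivity (\esum_(s in [set s | c.2 s])
   ((pA * pB * pC)%:E * (fine (P [set w | X c.1.1.1 c.1.1.2 c.1.2 w = s]))%:E)).
  apply: eq_esum => s _; etransitivity; first exact: IH.
  rewrite -cats1 big_cat big_seq1 /= -EFinM; congr (_%:E).
  by rewrite /pA /pB /pC -!mulrA; do 2 congr (_ * _)%R; exact: mulrC.
rewrite my_esumZl; first last.
- by move=> s _; rewrite lee_fin fineP_ge0.
- by rewrite !mulr_ge0 // ?prodr_ge0 // => *; exact: fineP_ge0.
transitivity ((pA * pB * pC)%:E *
   \esum_(s in [set s | c.2 s]) P [set w | X c.1.1.1 c.1.1.2 c.1.2 w = s]).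
  congr (_ * _); apply: eq_esum => s _.
  by rewrite fineK // fin_num_measure //; exact: meas_X.
rewrite -(my_cadd P); first last.
- by move=> s s' w _ _ /= -> ->.
- by move=> s _; exact: meas_X.
rewrite -predX_bigcup.
transitivity ((pA * pB * pC)%:E * (fine (P [set w | c.2 (X c.1.1.1 c.1.1.2 c.1.2 w)]))%:E).
  by congr (_ * _); rewrite fineK // fin_num_measure //; exact: meas_Xp.
rewrite -EFinM big_cons; congr (_%:E); rewrite -/pC.
by rewrite [RHS]mulrA [RHS]mulrAC.
Qed.

Lemma lawN v m : isUH v -> fine (P [set w | N v w = m]) = pk P N m.
Proof. by case: HM => _ _ H3 _ _ Hv; rewrite /pk H3. Qed.

Lemma lawX k i v (p : pred (seq nat)) : (0 < i)%N -> isUH v ->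
  P [set w | p (X k i v w)] = P [set w | p (X k 1 [::] w)].
Proof.
case: HM => _ _ _ H4 _ i0 Hv.
rewrite !predX_bigcup !(my_cadd P); first last.
- by move=> s s' w _ _ /= -> ->.
- by move=> s _; exact: meas_X.
- by move=> s s' w _ _ /= -> ->.
- by move=> s _; exact: meas_X.
by apply: eq_esum => s _; exact: H4.
Qed.

Lemma lawXj k i v j y : (0 < i)%N -> isUH v ->
  fine (P [set w | nth 0%N (X k i v w) j.-1 == y]) = muLaw P X j k y.
Proof.
move=> i0 Hv; rewrite (@lawX k i v (fun s => nth 0%N s j.-1 == y)) // /muLaw.
by congr (fine (P _)); apply/seteqP; split => w /= /eqP.
Qed.

Definition wt (t : TT) : R :=
  \prod_(x <- t) (pk P N x.1.2 * \prod_(y <- x.2) muLaw P X x.1.1 x.1.2 y).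

Lemma prodAC pre t : isUH pre -> okT t ->
  ((\prod_(a <- Alist pre t) fine (P [set w | N a.1 w = a.2])) *
   (\prod_(c <- Clist pre t) fine (P [set w | c.2 (X c.1.1.1 c.1.1.2 c.1.2 w)])))%R
  = wt t.
Proof.
elim: t pre => [|[[j k] ys] t IH] pre; first by rewrite /wt !big_nil mulr1.
move=> Hp /= /andP[/andP[j0 _] ot].
have Hp' : isUH (rcons pre j) by rewrite /isUH all_rcons j0.
rewrite /wt big_cons big_cons big_cat /= big_map mulrACA -/(wt t) -(IH (rcons pre j)) //.
congr (_ * _)%R; rewrite lawN //; congr (_ * _)%R.
rewrite -[in RHS](map_nth_iota1 ys) big_map; apply: eq_big_seq => i.
by rewrite mem_iota => /andP[i0 _]; rewrite lawXj.
Qed.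

Lemma cyl_prob pre c t : isUH pre -> validT c t -> okT t ->
  P [set w | trajB N X pre c (wordT t) w = t] = (wt t)%:E.
Proof.
move=> Hp vt ot.
transitivity (P [set w | allA N (Alist pre t) w && (allB X [::] w && allC X (Clist pre t) w)]).
  congr (P _); apply/seteqP; split => w /=.
    by move/eqP; rewrite trajB_eq // => /andP[-> ->].
  by move=> /andP[HA HC]; apply/eqP; rewrite trajB_eq // HA HC.
rewrite prodC //=; first by rewrite big_nil mulr1 prodAC.
- exact: uniqA.
- exact: uniqC.
- exact: UH_A.
- exact: UH_C.
Qed.

Lemma cyl_set pre c t : validT c t ->
  [set w | trajB N X pre c (wordT t) w = t] =
  [set w | allA N (Alist pre t) w && (allB X [::] w && allC X (Clist pre t) w)].
Proof.
move=> vt; apply/seteqP; split => w /=.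
  by move/eqP; rewrite trajB_eq // => /andP[-> ->].
by move=> /andP[HA HC]; apply/eqP; rewrite trajB_eq // HA HC.
Qed.

Lemma cyl_meas pre c t : isUH pre -> validT c t -> okT t ->
  measurable [set w | trajB N X pre c (wordT t) w = t].
Proof.
move=> Hp vt ot; rewrite cyl_set //; apply: measI2.
  by apply: (@meas_all _ (fun a => isUH a.1)); [move=> a; exact: meas_N|exact: UH_A].
apply: measI2; first by rewrite (_ : [set w | allB X [::] w] = setT) //; apply/seteqP; split.
apply: (@meas_all _ (fun b => condK b.1)); last exact: UH_C.
by move=> b /andP[b0 bU]; exact: meas_Xp.
Qed.

Definition SQ (Q : pred nat) (z n : nat) : set TT :=
  [set t | [&& size t == n, validT z t, okT t & Q (endc z t)]].

Lemma sum_ones (U : Type) (s : seq U) : \sum_(i <- s) (1 : \bar R) = ((size s)%:R)%:E.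
Proof.
elim: s => [|x s IH]; first by rewrite big_nil.
by rewrite big_cons IH /= -EFinD -natr1 addrC.
Qed.

Lemma count_esum (Q : pred nat) z n w :
  ((count (fun v => Q (Zpar N X z v w)) (gen N n w))%:R)%:E =
  \esum_(t in SQ Q z n) (\1_([set w | trajB N X [::] z (wordT t) w = t]) w : R)%:E.
Proof.
rewrite (esumID [set t | trajB N X [::] z (wordT t) w = t]); last first.
  by move=> t _; rewrite lee_fin indicE.
rewrite [X in _ + X]esum1 ?adde0; last first.
  by move=> t [_ /= nt]; rewrite indicE memNset.
rewrite (@eq_esum _ _ _ _ (fun _ => 1)); last first.
  by move=> t [_ /= et]; rewrite indicE mem_set.
set s := [seq v <- gen N n w | Q (Zpar N X z v w)].
have -> : SQ Q z n `&` [set t | trajB N X [::] z (wordT t) w = t] =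
          (fun v => trajB N X [::] z v w) @` [set` s].
  apply/seteqP; split => t /=.
    move=> [/and4P[/eqP nt vt ot Qt] et]; exists (wordT t) => //.
    rewrite /s mem_filter mem_gen /Zpar Zaux_traj et Qt /= size_map nt eqxx /=.
    by rewrite -(ok_traj N X [::] z) et.
  move=> [v]; rewrite /s mem_filter mem_gen => /and3P[Qv /eqP nv gv] <-.
  split; last by rewrite word_traj.
  by rewrite /SQ /= size_traj nv eqxx valid_traj ok_traj gv -Zaux_traj.
rewrite esum_image; last by move=> v1 v2 _ _ /(congr1 wordT); rewrite !word_traj.
rewrite esum_fset; [|exact: finite_seq|by []].
rewrite -fsbig_seq; last by rewrite filter_uniq // uniq_gen.
by rewrite sum_ones size_filter.
Qed.

Lemma ET (Q : pred nat) z n :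
  \int[P]_w ((count (fun v => Q (Zpar N X z v w)) (gen N n w))%:R)%:E =
  \esum_(t in SQ Q z n) (wt t)%:E.
Proof.
under eq_integral do rewrite count_esum.
rewrite my_int_esum; first last.
- by move=> t w; rewrite lee_fin indicE.
- move=> t /and4P[_ vt ot _]; apply/measurable_EFinP; apply: measurable_indic.
  exact: cyl_meas.
apply: eq_esum => t /and4P[_ vt ot _].
rewrite integral_indic ?setIT //; first exact: cyl_prob. exact: cyl_meas.
Qed.

End Prob.

End BM.
Import BM.

Module CM.
Local Open Scope classical_set_scope.
Local Open Scope ring_scope.

Section CombA.
Context {T : Type} (E : nat -> T -> nat * nat) (Y : nat -> nat -> T -> nat).

Fixpoint trajA (c l m : nat) (w : T) : TT :=
  if m is m'.+1 then
    let ys := [seq Y l i w | i <- iota 1 c] in (E l w, ys) :: trajA (sumn ys) l.+1 m' w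
  else [::].

Lemma endc_trajA_S c l m w :
  endc c (trajA c l m.+1 w) = sumn [seq Y (l + m) i w | i <- iota 1 (endc c (trajA c l m w))].
Proof.
elim: m c l => [|m IH] c l; first by rewrite /= addn0.
transitivity (endc (sumn [seq Y l i w | i <- iota 1 c])
   (trajA (sumn [seq Y l i w | i <- iota 1 c]) l.+1 m.+1 w)); first by [].
by rewrite IH addSnnS.
Qed.

Lemma Zprime_traj z n w : Zprime Y z n w = endc z (trajA z 0 n w).
Proof. by elim: n => [|n IH] //; rewrite endc_trajA_S -IH add0n -sum_iota. Qed.

Lemma size_trajA c l m w : size (trajA c l m w) = m.
Proof. by elim: m c l => [|m IH] c l //=; rewrite IH. Qed.

Lemma valid_trajA c l m w : validT c (trajA c l m w).
Proof. by elim: m c l => [|m IH] c l //=; rewrite size_map size_iota eqxx IH. Qed.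

Definition allE l (t : TT) w :=
  all (fun n => E (l + n) w == nth (0, 0)%N (map fst t) n) (iota 0 (size t)).

Fixpoint Slist (l : nat) (t : TT) : seq ((nat * nat) * nat) :=
  if t is x :: t' then
    [seq ((l, i), nth 0%N x.2 i.-1) | i <- iota 1 (size x.2)] ++ Slist l.+1 t'
  else [::].

Definition allY l t w := all (fun s => Y s.1.1 s.1.2 w == s.2) (Slist l t).

Lemma allE_cons l x t w : allE l (x :: t) w = (E l w == x.1) && allE l.+1 t w.
Proof.
rewrite /allE /= addn0; congr (_ && _).
rewrite -[1%N]/(1 + 0)%N iotaDl all_map; apply: eq_all => n /=.
by rewrite add1n addnS addSn.
Qed.

Lemma trajA_eq c l t w : validT c t ->
  (trajA c l (size t) w == t) = allE l t w && allY l t w.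
Proof.
elim: t c l => [|[e ys] t IH] c l //= /andP[/eqP <- vt].
rewrite allE_cons /allY /= all_cat all_map eqseq_cons xpair_eqE /=.
have -> : all (fun i => Y l i w == nth 0%N ys i.-1) (iota 1 (size ys))
   = ([seq Y l i w | i <- iota 1 (size ys)] == ys).
  by rewrite map_iota_eq; apply: eq_all => i; rewrite subn1.
case: (E l w == e) => //=.
case: eqP => [->|_] /=; last by rewrite andbF.
by rewrite IH.
Qed.

Lemma Slist_ge l t : all (fun s => l <= s.1.1)%N (Slist l t).
Proof.
elim: t l => [|x t IH] l //=; rewrite all_cat all_map.
apply/andP; split; first by apply/allP => i _ /=.
by apply: sub_all (IH l.+1) => s /=; exact: ltnW.
Qed.

Lemma Slist_cond l t : all (fun s => (s.1.1 < l + size t)%N && (0 < s.1.2)%N) (Slist l t).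
Proof.
elim: t l => [|x t IH] l //=; rewrite all_cat all_map.
apply/andP; split.
  by apply/allP => i; rewrite mem_iota /= addnS ltnS leq_addr => /andP[].
by apply: sub_all (IH l.+1) => s /=; rewrite addSnnS.
Qed.

Lemma uniqS l t : uniq (map fst (Slist l t)).
Proof.
elim: t l => [|x t IH] l //=; rewrite map_cat cat_uniq IH andbT.
rewrite -map_comp map_inj_uniq ?iota_uniq; last by move=> i1 i2 [].
apply/hasPn => kk /mapP[s sS ->]; apply/mapP => -[i _ /= es].
have := allP (Slist_ge l.+1 t) s sS; rewrite es ltnn.
by [].
Qed.

End CombA.

Section ProbA.
Context {R : realType} {d : measure_display} {Omega : measurableType d}
  (P : probability Omega R)
  (N : seq nat -> Omega -> nat) (X : nat -> nat -> seq nat -> Omega -> seq nat)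
  (nu : R) {d' : measure_display} {Omega' : measurableType d'}
  (P' : probability Omega' R) (E : nat -> Omega' -> nat * nat) (Y : nat -> nat -> Omega' -> nat).
Hypothesis HA : abpre_model P N X nu P' E Y.
Local Open Scope ereal_scope.

Definition wtA (t : TT) : R :=
  \prod_(x <- t) (envProb P N nu x.1 * \prod_(y <- x.2) muLaw P X x.1.1 x.1.2 y).

Lemma prodS l e0 t : size e0 = l ->
  (\prod_(s <- Slist l t) muLaw P X (nth (0, 0)%N (e0 ++ map fst t) s.1.1).1
                                    (nth (0, 0)%N (e0 ++ map fst t) s.1.1).2 s.2)%R =
  (\prod_(x <- t) \prod_(y <- x.2) muLaw P X x.1.1 x.1.2 y)%R.
Proof.
elim: t l e0 => [|[e ys] t IH] l e0 el; first by rewrite !big_nil.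
rewrite /= big_cat big_map big_cons /=.
rewrite -cat_rcons (IH l.+1); last by rewrite size_rcons el.
congr (_ * _)%R; rewrite -[in RHS](map_nth_iota1 ys) big_map; apply: eq_bigr => i _ /=.
by rewrite cat_rcons nth_cat el ltnn subnn.
Qed.

Lemma cylA_set z t : validT z t ->
  [set w | trajA E Y z 0 (size t) w = t] = [set w | allE E 0 t w && allY Y 0 t w].
Proof.
move=> vt; apply/seteqP; split => w /=.
  by move/eqP; rewrite trajA_eq.
by move=> H; apply/eqP; rewrite trajA_eq.
Qed.

Lemma cylA_meas z t : validT z t -> measurable [set w | trajA E Y z 0 (size t) w = t].
Proof.
case: HA => mE mY _ vt; rewrite cylA_set //; apply: measI2.
  apply: (@meas_all _ _ _ xpredT); last exact: all_predT. move=> n _.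
  rewrite (_ : [set w | _] = [set w | E (0 + n)%N w = nth (0, 0)%N (map fst t) n]).
    exact: mE.
  by apply/seteqP; split => w /= /eqP.
apply: (@meas_all _ _ _ (fun s => (0 < s.1.2)%N)); last first.
  by apply: sub_all (Slist_cond 0 t) => s /andP[].
move=> s s0; rewrite (_ : [set w | _] = [set w | Y s.1.1 s.1.2 w = s.2]).
  exact: mY.
by apply/seteqP; split => w /= /eqP.
Qed.

Lemma cylA_prob z t : validT z t ->
  P' [set w | trajA E Y z 0 (size t) w = t] = (wtA t)%:E.
Proof.
case: HA => _ _ H3 vt; rewrite cylA_set //.
have := H3 (map fst t) (Slist 0 t) (uniqS 0 t).
rewrite size_map => ->; last by apply: sub_all (Slist_cond 0 t) => s /andP[-> ->].
congr (_%:E); rewrite (prodS 0 [::]) // big_map -big_split /=.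
by [].
Qed.

Definition SQA (Q : pred nat) (z n : nat) : set TT :=
  [set t | [&& size t == n, validT z t & Q (endc z t)]].

Lemma PA (Q : pred nat) z n :
  P' [set w | Q (Zprime Y z n w)] = \esum_(t in SQA Q z n) (wtA t)%:E.
Proof.
have -> : [set w | Q (Zprime Y z n w)] =
    \bigcup_(t in SQA Q z n) [set w | trajA E Y z 0 (size t) w = t].
  apply/seteqP; split => w /=.
    move=> Qw; exists (trajA E Y z 0 n w); last by rewrite size_trajA.
    by rewrite /SQA /= size_trajA eqxx valid_trajA -(Zprime_traj E).
  by move=> [t /and3P[/eqP nt vt Qt] et]; rewrite (Zprime_traj E) -nt et.
rewrite (my_cadd P'); first last.
- move=> t t' w /and3P[/eqP nt _ _] /and3P[/eqP nt' _ _] /=.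
  by rewrite nt nt' => <- <-.
- by move=> t /and3P[_ vt _]; exact: cylA_meas.
by apply: eq_esum => t /and3P[_ vt _]; exact: cylA_prob.
Qed.

Lemma wt_ge0 t : (0 <= wt P N X t)%R.
Proof.
rewrite /wt; apply: prodr_ge0 => x _; apply: mulr_ge0; first exact: fineP_ge0.
by apply: prodr_ge0 => y _; exact: fineP_ge0.
Qed.

Lemma wtA_wt t : wtA t = if okT t then (nu ^- (size t) * wt P N X t)%R else 0%R.
Proof.
elim: t => [|[[j k] ys] t IH]; first by rewrite /wtA /wt !big_nil /= expr0 invr1 mulr1.
rewrite /wtA big_cons -/(wtA t) IH /envProb /okT /= -/(okT t).
case: (0 < j <= k)%N => /=; last by rewrite !mul0r.
case: (okT t); last by rewrite mulr0.
rewrite /wt big_cons /= -/(wt P N X t) exprS invfM.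
by ring.
Qed.

Lemma main_gen (HM : bwbp_model P N X) (nu0 : (0 <= nu)%R) (Q : pred nat) z n :
  P' [set w | Q (Zprime Y z n w)] =
  (nu ^- n)%:E * \int[P]_w ((count (fun v => Q (Zpar N X z v w)) (gen N n w))%:R)%:E.
Proof.
rewrite PA (ET P N X HM).
rewrite (esumID [set t | okT t]); last first.
  move=> t _; rewrite lee_fin wtA_wt; case: ifP => // _.
  by apply: mulr_ge0; [rewrite invr_ge0 exprn_ge0|exact: wt_ge0].
rewrite [X in _ + X]esum1 ?adde0; last first.
  by move=> t [_ /= /negP ot]; rewrite wtA_wt (negbTE ot).
have -> : SQA Q z n `&` [set t | okT t] = SQ Q z n.
  apply/seteqP; split => t /=.
    by move=> [/and3P[nt vt Qt] ot]; apply/and4P.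
  by move=> /and4P[nt vt ot Qt]; split => //; apply/and3P.
rewrite -my_esumZl; first last.
- by move=> t _; rewrite lee_fin wt_ge0.
- by rewrite invr_ge0 exprn_ge0.
by apply: eq_esum => t /and4P[/eqP nt _ ot _]; rewrite wtA_wt ot nt EFinM.
Qed.

End ProbA.

End CM.
Import CM.

Local Open Scope classical_set_scope.
Local Open Scope ring_scope.
Local Open Scope ereal_scope.

Theorem proposition1 (R : realType)
  (d : measure_display) (Omega : measurableType d) (P : probability Omega R)
  (N : seq nat -> Omega -> nat) (X : nat -> nat -> seq nat -> Omega -> seq nat)
  (nu : R)
  (d' : measure_display) (Omega' : measurableType d') (P' : probability Omega' R)
  (E : nat -> Omega' -> nat * nat) (Y : nat -> nat -> Omega' -> nat) :
  bwbp_model P N X ->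
  has_mean P N nu ->
  standing_assumptions P N X ->
  abpre_model P N X nu P' E Y ->
  forall n k z : nat,
    P' [set w | Zprime Y z n w = k] =
      (nu ^- n)%:E * \int[P]_w ((Tnk N X z n k w)%:R)%:E /\
    P' [set w | (0 < Zprime Y z n w)%N] =
      (nu ^- n)%:E * \int[P]_w ((Tstar N X z n w)%:R)%:E.
Proof.
move=> HM Hmean _ HA n k z.
have nu0 : (0 <= nu)%R.
  by rewrite -lee_fin -Hmean; apply: integral_ge0 => w _; rewrite lee_fin ler0n.
split.
- have -> : [set w | Zprime Y z n w = k] = [set w | (fun m => m == k) (Zprime Y z n w)].
    by apply/seteqP; split => w /= /eqP.
  exact: (main_gen _ _ _ _ _ _ _ HA HM nu0 (fun m => m == k)).
- exact: (main_gen _ _ _ _ _ _ _ HA HM nu0 (fun m => 0 < m)%N).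
Qed.
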